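(* Let $\alpha>0$, $\beta>0$, $\gamma>0$ and suppose that ${}_1F_2\left(\alpha\,;\beta,\gamma\,;-\frac{x^2}{4}\right)\ge0$ for all $x\in\mathbb{R}$. If $p\ge2$ and $0<a_j<b_j$ for $j=1,\dots,p-1$, then $$\Phi(x)={}_pF_{p+1}\left(\begin{array}{c}\alpha,\,a_1,\dots,a_{p-1}\\ \beta,\,\gamma,\,b_1,\dots,b_{p-1}\end{array}\biggl|\,-\frac{x^2}{4}\right)>0\quad\text{for all } x>0.$$
   Context: Generalized hypergeometric functions are defined by ${}_pF_{q}\left(\begin{array}{c}\alpha_1,\dots,\alpha_p\\ \beta_1,\dots,\beta_q\end{array}\big|\, z\right)=\sum_{k=0}^\infty\frac{(\alpha_1)_k\cdots(\alpha_p)_k}{k!\,(\beta_1)_k\cdots(\beta_q)_k}z^k$, where $(\alpha)_k=\Gamma(\alpha+k)/\Gamma(\alpha)$; in particular ${}_1F_2\left(a\,;b,c\,;z\right)$ has upper parameter $a$ and lower parameters $b,c$. *)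

(* Defs.v *)
From Stdlib Require Import Reals List.
From Coquelicot Require Import Coquelicot.
Open Scope R_scope.

Fixpoint poch (a : R) (k : nat) : R :=
  match k with
  | O => 1
  | S k' => poch a k' * (a + INR k')
  end.

Definition poch_prod (l : list R) (k : nat) : R :=
  fold_right (fun c acc => poch c k * acc) 1 l.

Definition hyp_term (A B : list R) (z : R) (k : nat) : R :=
  poch_prod A k / (INR (Factorial.fact k) * poch_prod B k) * z ^ k.

Definition hypergeom (A B : list R) (z : R) : R :=
  Series (hyp_term A B z).

(* Main.v *)
Require Import Defs.
From Stdlib Require Import Reals List Lra Lia.
From Coquelicot Require Import Coquelicot.
Open Scope R_scope.

Definition entire (g : nat -> R) := forall r, CV_disk g r.

Lemma entire_rad g : entire g -> CV_radius g = p_infty.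
Proof.
  intros H. unfold CV_radius. apply is_lub_Rbar_unique. split.
  - intros x _. exact I.
  - intros l Hl. destruct l as [l| |]; simpl; auto.
    + specialize (Hl (l+1) (H (l+1))). simpl in Hl. lra.
    + specialize (Hl 0 (H 0)). simpl in Hl. exact Hl.
Qed.

Lemma entire_lt g x : entire g -> Rbar_lt (Rabs x) (CV_radius g).
Proof. intros H; rewrite (entire_rad g H); exact I. Qed.

Lemma entire_ext g h : (forall k, g k = h k) -> entire g -> entire h.
Proof.
  intros E H r. unfold CV_disk. eapply ex_series_ext. 2: apply (H r).
  intros n; simpl. rewrite E; auto.
Qed.

Lemma entire_mul g mu : entire g -> (forall k, Rabs (mu k) <= 1) ->
  entire (fun k => g k * mu k).
Proof.
  intros H Hm r. unfold CV_disk. apply (@ex_series_le R_AbsRing R_CompleteNormedModule _ (fun n => Rabs (g n * r ^ n))).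
  2: apply H.
  intros n. change norm with Rabs. simpl.
  rewrite Rabs_Rabsolu.
  replace (g n * mu n * r ^ n) with ((g n * r^n) * mu n) by ring.
  rewrite Rabs_mult. specialize (Hm n).
  pose proof (Rabs_pos (g n * r ^ n)). nra.
Qed.

Lemma entire_abs g : entire g -> entire (fun k => Rabs (g k)).
Proof.
  intros H r. unfold CV_disk. eapply ex_series_ext. 2: apply (H r).
  intros n; simpl. rewrite !Rabs_mult, Rabs_Rabsolu; auto.
Qed.

Lemma entire_ex g z : entire g -> ex_pseries g z.
Proof. intros H; apply CV_disk_correct, H. Qed.

Definition PP (mu : nat -> R) := mu 0%nat = 1 /\ (forall k, 0 <= mu k <= 1) /\
  forall g, entire g -> g 0%nat = 1 -> (forall z, z <= 0 -> 0 <= PSeries g z) ->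
  forall z, z <= 0 -> 0 <= PSeries (fun k => g k * mu k) z.

Definition SPP (mu : nat -> R) := mu 0%nat = 1 /\ (forall k, 0 <= mu k <= 1) /\
  forall g, entire g -> g 0%nat = 1 -> (forall z, z <= 0 -> 0 <= PSeries g z) ->
  forall z, z <= 0 -> 0 < PSeries (fun k => g k * mu k) z.

Lemma SPP_PP mu : SPP mu -> PP mu.
Proof.
  intros [H0 [H1 H2]]; split; [|split]; auto.
  intros; apply Rlt_le; auto.
Qed.

Lemma abs_le1 x : 0 <= x <= 1 -> Rabs x <= 1.
Proof. intros; rewrite Rabs_right; lra. Qed.

Lemma PP_ext mu nu : (forall k, mu k = nu k) -> PP mu -> PP nu.
Proof.
  intros E [H0 [H1 H2]]; split; [|split].
  - rewrite <- E; auto.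
  - intros k; rewrite <- E; auto.
  - intros g Hg Hg0 HG z Hz. rewrite (PSeries_ext _ (fun k => g k * mu k)).
    + apply H2; auto.
    + intros n; rewrite E; auto.
Qed.

Lemma SPP_ext mu nu : (forall k, mu k = nu k) -> SPP mu -> SPP nu.
Proof.
  intros E [H0 [H1 H2]]; split; [|split].
  - rewrite <- E; auto.
  - intros k; rewrite <- E; auto.
  - intros g Hg Hg0 HG z Hz. rewrite (PSeries_ext _ (fun k => g k * mu k)).
    + apply H2; auto.
    + intros n; rewrite E; auto.
Qed.

Lemma PP_one : PP (fun _ => 1).
Proof.
  split; [|split]; auto.
  - intros; lra.
  - intros g Hg Hg0 HG z Hz. rewrite (PSeries_ext _ g). apply HG; auto.
    intros; ring.
Qed.

Lemma PP_comp mu nu : PP mu -> PP nu -> PP (fun k => mu k * nu k).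
Proof.
  intros [A0 [A1 A2]] [B0 [B1 B2]]; split; [|split].
  - rewrite A0, B0; ring.
  - intros k; specialize (A1 k); specialize (B1 k); split; nra.
  - intros g Hg Hg0 HG z Hz.
    rewrite (PSeries_ext _ (fun k => (g k * mu k) * nu k)).
    2: intros; ring.
    apply B2; auto.
    + apply entire_mul; auto. intros; apply abs_le1; auto.
    + rewrite Hg0, A0; ring.
Qed.

Lemma PP_SPP_comp mu nu : PP mu -> SPP nu -> SPP (fun k => mu k * nu k).
Proof.
  intros [A0 [A1 A2]] [B0 [B1 B2]]; split; [|split].
  - rewrite A0, B0; ring.
  - intros k; specialize (A1 k); specialize (B1 k); split; nra.
  - intros g Hg Hg0 HG z Hz.
    rewrite (PSeries_ext _ (fun k => (g k * mu k) * nu k)).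
    2: intros; ring.
    apply B2; auto.
    + apply entire_mul; auto. intros; apply abs_le1; auto.
    + rewrite Hg0, A0; ring.
Qed.

Lemma SPP_comp mu nu : SPP mu -> SPP nu -> SPP (fun k => mu k * nu k).
Proof. intros; apply PP_SPP_comp; auto; apply SPP_PP; auto. Qed.

Lemma Rpower_gt0 x y : 0 < Rpower x y.
Proof. unfold Rpower; apply exp_pos. Qed.

Ltac exps Hh := apply CV_radius_inside;
  rewrite ?CV_radius_scal, ?CV_radius_incr_1, ?CV_radius_derive, (entire_rad _ Hh); [exact I|..].

Lemma ode_id c h g : 0 < c -> entire h -> (forall k, h k = g k * (c / (c + INR k))) ->
  forall x, c * PSeries h x + x * PSeries (PS_derive h) x = c * PSeries g x.
Proof.
  intros Hc Hh E x.
  rewrite <- PSeries_incr_1.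
  rewrite <- (PSeries_scal c h).
  rewrite <- PSeries_plus.
  2: exps Hh; lra.
  2: exps Hh.
  rewrite <- PSeries_scal. apply PSeries_ext.
  intros [|n]; unfold PS_plus, PS_scal, PS_incr_1, PS_derive;
   change plus with Rplus; change scal with Rmult; change mult with Rmult.
  - rewrite E; simpl. change zero with 0. field. lra.
  - rewrite E. pose proof (pos_INR (S n)). field. lra.
Qed.

Lemma K_deriv c h g : 0 < c -> entire h -> (forall k, h k = g k * (c / (c + INR k))) ->
  forall w, 0 < w ->
  derivable_pt_lim (fun w => Rpower w c * PSeries h (-w)) w
     (Rpower w (c-1) * (c * PSeries g (-w))).
Proof.
  intros Hc Hh E w Hw.
  apply is_derive_Reals.
  assert (D1 : is_derive (fun t : R => -t) w (-1)) by (auto_derive; auto; ring).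
  assert (D2 : is_derive (fun t => PSeries h (-t)) w (scal (-1) (PSeries (PS_derive h) (-w)))).
  { apply (is_derive_comp (PSeries h) (fun t => -t)); auto.
    apply is_derive_PSeries. apply entire_lt; auto. }
  assert (D3 : is_derive (fun t => Rpower t c) w (c * Rpower w (c-1))).
  { apply is_derive_Reals. apply derivable_pt_lim_power; auto. }
  pose proof (is_derive_mult _ _ _ _ _ D3 D2 ltac:(intros; apply Rmult_comm)) as D.
  pose proof (ode_id c h g Hc Hh E (-w)) as I.
  assert (Ew: Rpower w c = Rpower w (c-1) * w).
  { transitivity (Rpower w ((c-1)+1)). f_equal; ring. rewrite Rpower_plus, Rpower_1; auto. }
  simpl in D. unfold mult, plus, scal in D; simpl in D. cbv beta in D.
  replace (Rpower w (c-1) * (c * PSeries g (-w))) with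
   (c * Rpower w (c - 1) * PSeries h (- w) + Rpower w c * (-1 * PSeries (PS_derive h) (- w))).
  exact D.
  rewrite <- I, Ew. ring.
Qed.


Lemma SPP_M c : 0 < c -> SPP (fun k => c / (c + INR k)).
Proof.
  intros Hc. split; [|split].
  - simpl. field. lra.
  - intros k. pose proof (pos_INR k). split.
    + apply Rlt_le, Rdiv_lt_0_compat; lra.
    + apply Rmult_le_reg_r with (c + INR k); [lra|].
      field_simplify; lra.
  - intros g Hg Hg0 HG z Hz.
    set (h := fun k => g k * (c / (c + INR k))).
    assert (Hh : entire h).
    { apply entire_mul; auto. intros k. pose proof (pos_INR k).
      rewrite Rabs_right. 2: apply Rle_ge, Rlt_le, Rdiv_lt_0_compat; lra.
      apply Rmult_le_reg_r with (c + INR k); [lra|]. field_simplify; lra. }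
    assert (E : forall k, h k = g k * (c / (c + INR k))) by reflexivity.
    change (0 < PSeries h z).
    assert (H0 : PSeries h 0 = 1).
    { rewrite PSeries_0. unfold h. rewrite Hg0. simpl. field. lra. }
    pose proof (PSeries_continuity h 0 (entire_lt h 0 Hh)) as Hcont.
    destruct (Hcont (1/2)) as [eta [Heta Hb]]; [lra|].
    assert (Hsmall : forall w, 0 <= w < eta -> 0 < PSeries h (-w)).
    { intros w Hw. destruct (Req_dec w 0) as [->|Hw0].
      - rewrite Ropp_0, H0; lra.
      - specialize (Hb (-w)). simpl in Hb. unfold R_dist, D_x, no_cond in Hb.
        assert (Hd : (True /\ 0 <> - w) /\ Rabs (- w - 0) < eta).
        { split. split; [exact I|lra]. rewrite Rminus_0_r, Rabs_Ropp, Rabs_right; lra. }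
        specialize (Hb Hd). rewrite H0 in Hb.
        apply Rabs_def2 in Hb. lra. }
    replace z with (- (-z)) by ring.
    destruct (Rlt_le_dec (-z) eta) as [Hlt|Hge].
    + apply Hsmall; lra.
    + set (v := -z). set (w0 := eta / 2).
      assert (Hw0 : 0 < w0 < v) by (unfold w0, v in *; lra).
      destruct (MVT_cor2 (fun w => Rpower w c * PSeries h (-w))
                 (fun w => Rpower w (c-1) * (c * PSeries g (-w))) w0 v) as [xi [Hxi1 Hxi2]].
      * lra.
      * intros t Ht. apply K_deriv; auto. lra.
      * assert (0 <= Rpower xi (c-1) * (c * PSeries g (-xi))).
        { apply Rmult_le_pos. apply Rlt_le, Rpower_gt0.
          apply Rmult_le_pos. lra. apply HG. lra. }
        assert (0 < Rpower w0 c * PSeries h (-w0)).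
        { apply Rmult_lt_0_compat. apply Rpower_gt0. apply Hsmall. unfold w0; lra. }
        assert (0 < Rpower v c * PSeries h (-v)) by nra.
        pose proof (Rpower_gt0 v c).
        destruct (Rle_lt_dec (PSeries h (-v)) 0); [|auto].
        nra.
Qed.

Definition fac (a b : R) (k : nat) := a * (b + INR k) / (b * (a + INR k)).

Lemma SPP_f a b : 0 < a < b -> SPP (fac a b).
Proof.
  intros Hab. destruct (SPP_M a ltac:(lra)) as [_ [M1 M2]].
  set (l := a / b).
  assert (Hl : 0 < l < 1).
  { unfold l; split. apply Rdiv_lt_0_compat; lra.
    apply Rmult_lt_reg_r with b; [lra|]. field_simplify; lra. }
  assert (E : forall k, fac a b k = l + (1 - l) * (a / (a + INR k))).
  { intros k. pose proof (pos_INR k). unfold fac, l. field. lra. }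
  split; [|split].
  - rewrite E. simpl. field_simplify; [|lra]. reflexivity.
  - intros k. rewrite E. specialize (M1 k). split; nra.
  - intros g Hg Hg0 HG z Hz.
    rewrite (PSeries_ext _ (PS_plus (PS_scal l g) (PS_scal (1 - l) (fun k => g k * (a / (a + INR k)))))).
    2: { intros n. unfold PS_plus, PS_scal. change plus with Rplus; change scal with Rmult;
         change mult with Rmult. rewrite E. ring. }
    rewrite PSeries_plus, !PSeries_scal.
    + specialize (M2 g Hg Hg0 HG z Hz). specialize (HG z Hz). nra.
    + apply CV_radius_inside. rewrite CV_radius_scal, (entire_rad _ Hg). exact I. lra.
    + apply CV_radius_inside. rewrite CV_radius_scal. rewrite entire_rad. exact I.
      apply entire_mul; auto. intros; apply abs_le1; auto. lra.
Qed.

Lemma poch_pos x k : 0 < x -> 0 < poch x k.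
Proof.
  intros Hx; induction k; simpl. lra.
  pose proof (pos_INR k). apply Rmult_lt_0_compat; lra.
Qed.

Lemma pochS x k : poch x k * (x + INR k) = x * poch (x + 1) k.
Proof.
  induction k.
  - simpl. ring.
  - simpl poch. rewrite S_INR.
    transitivity ((poch x k * (x + INR k)) * (x + INR k + 1)). ring.
    rewrite IHk. ring.
Qed.

Lemma ratio_bound a b k : 0 < a < b ->
  1 <= poch b k / poch a k <= (b / a) ^ k.
Proof.
  intros Hab. induction k.
  - simpl. split; lra.
  - simpl poch. simpl pow. pose proof (pos_INR k).
    pose proof (poch_pos a k ltac:(lra)). pose proof (poch_pos b k ltac:(lra)).
    replace (poch b k * (b + INR k) / (poch a k * (a + INR k))) with
      ((poch b k / poch a k) * ((b + INR k) / (a + INR k))) by (field; lra).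
    assert (1 <= (b + INR k) / (a + INR k) <= b / a).
    { split.
      - apply Rmult_le_reg_r with (a + INR k); [lra|]. field_simplify; lra.
      - apply Rmult_le_reg_r with (a + INR k); [lra|].
        apply Rmult_le_reg_r with a; [lra|]. field_simplify; nra. }
    split. nra.
    assert (0 <= (b/a)^k). { apply pow_le. apply Rlt_le, Rdiv_lt_0_compat; lra. }
    rewrite (Rmult_comm (b/a)). apply Rmult_le_compat; lra.
Qed.

Lemma m_bound a b k : 0 < a < b -> 0 < poch a k / poch b k <= 1.
Proof.
  intros Hab. pose proof (ratio_bound a b k Hab) as [H1 _].
  pose proof (poch_pos a k ltac:(lra)). pose proof (poch_pos b k ltac:(lra)).
  split. apply Rdiv_lt_0_compat; lra.
  replace (poch a k / poch b k) with (/ (poch b k / poch a k)) by (field; lra).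
  rewrite <- Rinv_1. apply Rinv_le_contravar; lra.
Qed.

Fixpoint Qp (a b : R) (n : nat) : nat -> R :=
  match n with
  | O => fun _ => 1
  | S n => fun k => Qp a b n k * fac (a + INR n) (b + INR n) k
  end.

Lemma PP_Qp a b n : 0 < a < b -> PP (Qp a b n).
Proof.
  intros Hab. induction n.
  - apply PP_one.
  - simpl. apply PP_comp; auto. apply SPP_PP, SPP_f. pose proof (pos_INR n). lra.
Qed.

Lemma Qp_eq a b n k : 0 < a < b ->
  Qp a b n k = poch a k / poch b k * (poch (b + INR n) k / poch (a + INR n) k).
Proof.
  intros Hab. induction n.
  - simpl. rewrite !Rplus_0_r. pose proof (poch_pos a k ltac:(lra)).
    pose proof (poch_pos b k ltac:(lra)). field. lra.
  - simpl Qp. rewrite IHn. unfold fac. pose proof (pos_INR n). pose proof (pos_INR k).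
    rewrite S_INR.
    pose proof (pochS (a + INR n) k). pose proof (pochS (b + INR n) k).
    pose proof (poch_pos a k ltac:(lra)). pose proof (poch_pos b k ltac:(lra)).
    pose proof (poch_pos (a + INR n) k ltac:(lra)). pose proof (poch_pos (b + INR n) k ltac:(lra)).
    pose proof (poch_pos (a + INR n + 1) k ltac:(lra)).
    replace (a + (INR n + 1)) with (a + INR n + 1) by ring.
    replace (b + (INR n + 1)) with (b + INR n + 1) by ring.
    replace (poch (b + INR n + 1) k) with (poch (b + INR n) k * (b + INR n + INR k) / (b + INR n)).
    2: { rewrite H2. field. lra. }
    replace (poch (a + INR n + 1) k) with (poch (a + INR n) k * (a + INR n + INR k) / (a + INR n)).
    2: { rewrite H1. field. lra. }
    field. repeat split; try lra.
Qed.

Lemma lim_inv a : 0 < a -> is_lim_seq (fun n => / (a + INR n)) 0.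
Proof.
  intros Ha.
  assert (L : is_lim_seq (fun n => a + INR n) p_infty).
  { eapply is_lim_seq_plus. apply is_lim_seq_const. apply is_lim_seq_INR. simpl. constructor. }
  pose proof (is_lim_seq_inv _ _ L ltac:(discriminate)) as H. simpl in H. exact H.
Qed.

Lemma ex_ps g z : entire g -> ex_series (fun k => g k * z ^ k).
Proof. intros Hg. apply ex_series_Rabs. apply (Hg z). Qed.

Lemma key_bound a b g z n : 0 < a < b -> entire g -> g 0%nat = 1 ->
  (forall z, z <= 0 -> 0 <= PSeries g z) -> z <= 0 ->
  - (PSeries (fun k => Rabs (g k)) ((b + INR n) / (a + INR n) * Rabs z)
     - PSeries (fun k => Rabs (g k)) (Rabs z))
  <= PSeries (fun k => g k * (poch a k / poch b k)) z.
Proof.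
  intros Hab Hg Hg0 HG Hz.
  pose proof (pos_INR n) as Hn.
  set (rho := (b + INR n) / (a + INR n)).
  set (m := fun k => poch a k / poch b k).
  set (Rk := fun k => poch (b + INR n) k / poch (a + INR n) k).
  assert (Hm : forall k, 0 < m k <= 1) by (intros; apply m_bound; auto).
  assert (HR : forall k, 1 <= Rk k <= rho ^ k) by (intros; apply ratio_bound; lra).
  destruct (PP_Qp a b n Hab) as [Q0 [Q1 Q2]].
  pose proof (Q2 g Hg Hg0 HG z Hz) as HP.
  assert (Eg1 : entire (fun k => g k * Qp a b n k)).
  { apply entire_mul; auto. intros; apply abs_le1; auto. }
  assert (Eg2 : entire (fun k => g k * m k)).
  { apply entire_mul; auto. intros; apply abs_le1; specialize (Hm k); lra. }
  set (d := fun k => g k * m k * (Rk k - 1) * z ^ k).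
  set (e := fun k => Rabs (g k) * (rho * Rabs z) ^ k - Rabs (g k) * Rabs z ^ k).
  assert (D1 : PSeries (fun k => g k * Qp a b n k) z - PSeries (fun k => g k * m k) z = Series d).
  { unfold PSeries. rewrite <- Series_minus; try apply ex_ps; auto.
    apply Series_ext. intros k. unfold d. rewrite Qp_eq; auto. fold (m k). fold (Rk k). ring. }
  assert (Ebd : forall k, 0 <= Rabs (d k) <= e k).
  { intros k. split. apply Rabs_pos. unfold d, e.
    rewrite !Rabs_mult, Rpow_mult_distr, <- RPow_abs.
    specialize (Hm k). specialize (HR k).
    rewrite (Rabs_right (m k)) by lra. rewrite (Rabs_right (Rk k - 1)) by lra.
    pose proof (Rabs_pos (g k)). assert (0 <= Rabs z ^ k) by (apply pow_le, Rabs_pos).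
    assert (m k * (Rk k - 1) <= rho ^ k - 1) by nra.
    assert (0 <= Rabs (g k) * Rabs z ^ k) by nra.
    nra. }
  assert (Ee : ex_series e).
  { apply (@ex_series_ext R_AbsRing R_NormedModule (fun k => plus (Rabs (g k) * (rho * Rabs z) ^ k) (opp (Rabs (g k) * Rabs z ^ k)))).
    intros k; reflexivity.
    apply (@ex_series_minus R_AbsRing R_NormedModule); apply ex_ps; apply entire_abs; auto. }
  assert (Ee2 : Series e = PSeries (fun k => Rabs (g k)) (rho * Rabs z) - PSeries (fun k => Rabs (g k)) (Rabs z)).
  { unfold e, PSeries. rewrite <- Series_minus; try apply ex_ps; try apply entire_abs; auto. }
  assert (D2 : Rabs (Series d) <= Series e).
  { eapply Rle_trans. apply Series_Rabs.
    apply (@ex_series_le R_AbsRing R_CompleteNormedModule _ e); auto.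
    intros k. change norm with Rabs. simpl. rewrite Rabs_Rabsolu. apply Ebd.
    apply Series_le; auto. }
  rewrite <- Ee2. apply Rabs_le_between in D2. change (- Series e <= PSeries (fun k => g k * m k) z). lra.
Qed.

Lemma PP_beta a b : 0 < a < b -> PP (fun k => poch a k / poch b k).
Proof.
  intros Hab. split; [|split].
  - simpl. field.
  - intros k; pose proof (m_bound a b k Hab); lra.
  - intros g Hg Hg0 HG z Hz.
    set (A := PSeries (fun k => Rabs (g k))).
    assert (Lr : is_lim_seq (fun n => (b + INR n) / (a + INR n) * Rabs z) (Rabs z)).
    { apply is_lim_seq_ext with (fun n => Rabs z + ((b - a) * Rabs z) * / (a + INR n)).
      - intros n. pose proof (pos_INR n). field. lra.
      - replace (Finite (Rabs z)) with (Finite (Rabs z + ((b - a) * Rabs z) * 0)) by (f_equal; ring).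
        apply is_lim_seq_plus'. apply is_lim_seq_const.
        apply is_lim_seq_mult'. apply is_lim_seq_const. apply lim_inv; lra. }
    assert (LA : is_lim_seq (fun n => A ((b + INR n) / (a + INR n) * Rabs z)) (A (Rabs z))).
    { apply is_lim_seq_continuous; auto. apply PSeries_continuity.
      apply entire_lt, entire_abs; auto. }
    assert (L0 : is_lim_seq (fun n => - (A ((b + INR n) / (a + INR n) * Rabs z) - A (Rabs z))) 0).
    { replace (Finite 0) with (Finite (- (A (Rabs z) - A (Rabs z)))) by (f_equal; ring).
      apply (is_lim_seq_opp (fun n => A ((b + INR n) / (a + INR n) * Rabs z) - A (Rabs z)) (A (Rabs z) - A (Rabs z))).
      apply is_lim_seq_minus'; auto. apply is_lim_seq_const. }
    pose proof (is_lim_seq_le _ (fun _ => PSeries (fun k => g k * (poch a k / poch b k)) z) _ _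
       (fun n => key_bound a b g z n Hab Hg Hg0 HG Hz) L0 (is_lim_seq_const _)) as H.
    simpl in H. exact H.
Qed.

Lemma SPP_beta a b : 0 < a < b -> SPP (fun k => poch a k / poch b k).
Proof.
  intros Hab.
  apply SPP_ext with (fun k => poch (a+1) k / poch (b+1) k * fac a b k).
  - intros k. unfold fac. pose proof (pos_INR k).
    pose proof (pochS a k). pose proof (pochS b k).
    pose proof (poch_pos a k ltac:(lra)). pose proof (poch_pos b k ltac:(lra)).
    pose proof (poch_pos (a+1) k ltac:(lra)). pose proof (poch_pos (b+1) k ltac:(lra)).
    replace (poch (a+1) k) with (poch a k * (a + INR k) / a) by (rewrite H0; field; lra).
    replace (poch (b+1) k) with (poch b k * (b + INR k) / b) by (rewrite H1; field; lra).
    field. repeat split; lra.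
  - apply PP_SPP_comp. apply PP_beta; lra. apply SPP_f; auto.
Qed.

Lemma poch_prod_pos l k : (forall x, In x l -> 0 < x) -> 0 < poch_prod l k.
Proof.
  induction l as [|x l IH]; intros H; simpl. lra.
  apply Rmult_lt_0_compat. apply poch_pos, H; simpl; auto.
  apply IH; intros; apply H; simpl; auto.
Qed.

Lemma SPP_list (l : list nat) (a b : nat -> R) : l <> nil ->
  (forall j, In j l -> 0 < a j < b j) ->
  SPP (fun k => poch_prod (map a l) k / poch_prod (map b l) k).
Proof.
  induction l as [|j l IH]; intros Hn H. contradiction.
  assert (Hj : 0 < a j < b j) by (apply H; simpl; auto).
  destruct l as [|j' l'].
  - apply SPP_ext with (fun k => poch (a j) k / poch (b j) k).
    + intros k. simpl. pose proof (poch_pos (b j) k ltac:(lra)). field. lra.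
    + apply SPP_beta; auto.
  - eapply SPP_ext. 2: apply SPP_comp; [apply (SPP_beta (a j) (b j) Hj)| apply IH].
    + intros k. cbv beta.
      assert (0 < poch_prod (map b (j' :: l')) k).
      { apply poch_prod_pos. intros x Hx. apply in_map_iff in Hx.
        destruct Hx as [y [<- Hy]]. assert (0 < a y < b y) by (apply H; simpl; auto). lra. }
      pose proof (poch_pos (b j) k ltac:(lra)).
      change (poch_prod (map a (j :: j' :: l')) k) with (poch (a j) k * poch_prod (map a (j' :: l')) k).
      change (poch_prod (map b (j :: j' :: l')) k) with (poch (b j) k * poch_prod (map b (j' :: l')) k).
      field. lra.
    + discriminate.
    + intros; apply H; simpl; auto.
Qed.

Definition g1 (al be ga : R) (k : nat) :=
  poch_prod (al :: nil) k / (INR (Factorial.fact k) * poch_prod (be :: ga :: nil) k).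

Lemma g1_entire al be ga : 0 < al -> 0 < be -> 0 < ga -> entire (g1 al be ga).
Proof.
  intros Ha Hb Hc r.
  assert (NZ : forall n, 0 < g1 al be ga n).
  { intros n. unfold g1. simpl. pose proof (poch_pos al n Ha). pose proof (poch_pos be n Hb).
    pose proof (poch_pos ga n Hc). pose proof (INR_fact_lt_0 n).
    apply Rdiv_lt_0_compat. lra. apply Rmult_lt_0_compat; auto. nra. }
  apply CV_disk_DAlembert with 0.
  - intros n; specialize (NZ n); lra.
  - set (C := (1 + al / be) / ga).
    apply is_lim_seq_le_le with (fun _ => 0) (fun n => C * / (1 + INR n)).
    + intros n. pose proof (pos_INR n).
      assert (E : g1 al be ga (S n) / g1 al be ga n =
                  ((al + INR n) / (be + INR n)) * / (ga + INR n) * / (1 + INR n)).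
      { unfold g1. simpl poch_prod. simpl poch.
        rewrite fact_simpl, mult_INR, S_INR.
        pose proof (poch_pos al n Ha). pose proof (poch_pos be n Hb).
        pose proof (poch_pos ga n Hc). pose proof (INR_fact_lt_0 n).
        field. repeat split; lra. }
      rewrite E. 
      assert (B1 : 0 <= (al + INR n) / (be + INR n) <= 1 + al / be).
      { split. apply Rlt_le, Rdiv_lt_0_compat; lra.
        apply Rmult_le_reg_r with (be + INR n); [lra|].
        apply Rmult_le_reg_r with be; [lra|]. field_simplify; nra. }
      assert (B2 : 0 <= / (ga + INR n) <= / ga).
      { split. apply Rlt_le, Rinv_0_lt_compat; lra. apply Rinv_le_contravar; lra. }
      assert (B3 : 0 < / (1 + INR n)) by (apply Rinv_0_lt_compat; lra).
      rewrite Rabs_right.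
      2: { apply Rle_ge. apply Rmult_le_pos; [apply Rmult_le_pos|]; lra. }
      split. apply Rmult_le_pos; [apply Rmult_le_pos|]; lra.
      unfold C. apply Rmult_le_compat_r. lra.
      unfold Rdiv at 2. apply Rmult_le_compat; lra.
    + apply is_lim_seq_const.
    + replace (Finite 0) with (Finite (C * 0)) by (f_equal; ring).
      apply is_lim_seq_mult'. apply is_lim_seq_const. apply lim_inv; lra.
  - left; reflexivity.
Qed.

Theorem theorem7 (alpha beta gamma : R) :
  0 < alpha -> 0 < beta -> 0 < gamma ->
  (forall x : R, 0 <= hypergeom (alpha :: nil) (beta :: gamma :: nil) (- x ^ 2 / 4)) ->
  forall (p : nat) (a b : nat -> R),
    (2 <= p)%nat ->
    (forall j : nat, (1 <= j <= p - 1)%nat -> 0 < a j /\ a j < b j) ->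
    forall x : R, 0 < x ->
      0 < hypergeom (alpha :: map a (seq 1 (p - 1)))
                    (beta :: gamma :: map b (seq 1 (p - 1))) (- x ^ 2 / 4).
Proof.
  intros Ha Hb Hc Hyp p a b Hp Hab x Hx.
  set (L := seq 1 (p - 1)).
  assert (HL : L <> nil).
  { unfold L. destruct (p - 1)%nat eqn:E. lia. simpl. discriminate. }
  assert (Hin : forall j, In j L -> 0 < a j < b j).
  { intros j Hj. unfold L in Hj. apply in_seq in Hj. apply Hab. lia. }
  destruct (SPP_list L a b HL Hin) as [_ [_ S]].
  assert (Hbl : forall k, 0 < poch_prod (map b L) k).
  { intros k. apply poch_prod_pos. intros y Hy. apply in_map_iff in Hy.
    destruct Hy as [j [<- Hj]]. specialize (Hin j Hj). lra. }
  unfold hypergeom.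
  change (0 < PSeries (fun k => poch_prod (alpha :: map a L) k /
     (INR (Factorial.fact k) * poch_prod (beta :: gamma :: map b L) k)) (- x ^ 2 / 4)).
  rewrite (PSeries_ext _ (fun k => g1 alpha beta gamma k * (poch_prod (map a L) k / poch_prod (map b L) k))).
  2: { intros k. unfold g1. simpl poch_prod.
       pose proof (poch_pos beta k Hb). pose proof (poch_pos gamma k Hc).
       pose proof (INR_fact_lt_0 k). specialize (Hbl k).
       field. repeat split; lra. }
  apply S.
  - apply g1_entire; auto.
  - unfold g1. simpl. field.
  - intros z Hz. specialize (Hyp (2 * sqrt (- z))).
    unfold hypergeom in Hyp.
    change (0 <= PSeries (g1 alpha beta gamma) (- (2 * sqrt (- z)) ^ 2 / 4)) in Hyp.
    replace z with (- (2 * sqrt (- z)) ^ 2 / 4). exact Hyp.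
    simpl. rewrite Rmult_1_r.
    replace (2 * sqrt (- z) * (2 * sqrt (- z))) with (4 * (sqrt (-z) * sqrt (-z))) by ring.
    rewrite sqrt_sqrt by lra. field.
  - assert (0 < x ^ 2) by (apply pow_lt; auto). lra.
Qed.
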